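(* Let $n\ge 2$ and regard $\ell_{T(A_n)}$ as a random variable on $A_n$ with the uniform distribution. Then $$E[\ell_{T(A_n)}]=n-H_n-\tfrac12,\qquad \mathrm{Var}[\ell_{T(A_n)}]=H_n-H_{n,2}-\tfrac14.$$
   Context: $A_n$ is the alternating group on $\{1,\dots,n\}$, $T(A_n)=\{(1\,2)(i\,j)\mid 1\le i<j\le n\}$, and $\ell_{T(A_n)}(v)=\min\{r\ge 0\mid v=t_1\cdots t_r,\ t_i\in T(A_n)\}$. $E[s]=\frac{1}{|A_n|}\sum_{v\in A_n}s(v)$ and $\mathrm{Var}[s]=E[s^2]-E[s]^2$. $H_n=\sum_{i=1}^n \frac1i$ and $H_{n,2}=\sum_{i=1}^n\frac{1}{i^2}$. *)

(* Defs.v *)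
From mathcomp Require Import all_boot all_order all_algebra all_fingroup all_solvable.
From Stdlib Require Import ClassicalEpsilon.
Set Implicit Arguments. Unset Strict Implicit. Unset Printing Implicit Defensive.
Import GRing.Theory Num.Theory.
Local Open Scope ring_scope.

(* Points 1..n are represented by 'I_n = {0,...,n-1}; the paper's points 1,2
   are the ordinals with values 0,1. *)

Definition TA (n : nat) : {set {perm 'I_n}} :=
  [set s : {perm 'I_n} | [exists a : 'I_n, exists b : 'I_n,
      exists i : 'I_n, exists j : 'I_n,
      [&& val a == 0%N, val b == 1%N, (i < j)%N & s == (tperm a b * tperm i j)%g]]].

Definition is_prod_of (n r : nat) (v : {perm 'I_n}) : bool :=
  [exists w : r.-tuple {perm 'I_n},
     all (fun t => t \in TA n) w && ((\prod_(t <- w) t)%g == v)].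

(* ell_T(v) = min { r >= 0 | v = t_1 ... t_r, t_i in T(A_n) }
   (set to 0 if no such r exists, which never happens for v in A_n). *)
Definition ellT (n : nat) (v : {perm 'I_n}) : nat :=
  match excluded_middle_informative (exists r, is_prod_of r v) with
  | left h => ex_minn h
  | right _ => 0%N
  end.

Definition harm (n : nat) : rat := \sum_(1 <= i < n.+1) (i%:R)^-1.
Definition harm2 (n : nat) : rat := \sum_(1 <= i < n.+1) ((i%:R) ^+ 2)^-1.

Definition EAlt (n : nat) (s : {perm 'I_n} -> rat) : rat :=
  (#|(Alt 'I_n)|%:R)^-1 * \sum_(v in (Alt 'I_n)) s v.
Definition VarAlt (n : nat) (s : {perm 'I_n} -> rat) : rat :=
  EAlt (fun v => s v ^+ 2) - (EAlt s) ^+ 2.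

(* Main.v *)
Require Import Defs.
From mathcomp Require Import all_boot all_order all_algebra all_fingroup all_solvable.
From mathcomp Require Import zify.
From Stdlib Require Import ClassicalEpsilon.
From mathcomp Require Import ring lra.
Import GRing.Theory Num.Theory.
Set Implicit Arguments. Unset Strict Implicit. Unset Printing Implicit Defensive.

Section Gen.
Variables (T : finType) (a b : T).
Hypothesis ab : a != b.
Local Notation t0 := (tperm a b).

Local Open Scope group_scope.
Definition cyc (u : {perm T}) := #|porbits u|.

Lemma cyc_le u : cyc u <= #|T|.
Proof. exact: leq_imset_card. Qed.

Lemma porbit_fix (u : {perm T}) m : u m = m -> porbit u m = [set m].
Proof.
move=> um; apply/setP => z; rewrite inE; apply/porbitP/eqP => [[i ->]|->].
  by rewrite permX_fix.
by exists 0%N; rewrite expg0 perm1.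
Qed.

Lemma cyc1 : cyc 1 = #|T|.
Proof.
rewrite /cyc /porbits.
have H : porbit (1 : {perm T}) =1 set1 by move=> x; apply: porbit_fix; rewrite perm1.
by rewrite (eq_imset _ H) card_imset //; apply: set1_inj.
Qed.

Lemma incr (u : {perm T}) : u != 1%g ->
  exists x y, x != y /\ cyc (tperm x y * u) = (cyc u).+1.
Proof.
move=> u1.
case: (pickP (fun x => u x != x)) => [x hx|h]; last first.
  by case/eqP: u1; apply/permP => x; rewrite perm1; apply/eqP; move: (h x) => /= /negbFE.
exists x, (u x); split; first by rewrite eq_sym.
have := porbits_mul_tperm u x (u x).
have -> : x \in porbit u (u x) by rewrite porbit_sym; have := mem_porbit u 1 x; rewrite expg1.
rewrite /= eq_sym hx /cyc; rewrite /= addn0 => ->; by rewrite addn1.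
Qed.

Lemma cyc_eq1 u : cyc u = #|T| -> u = 1%g.
Proof.
move=> hu; apply/eqP; apply/negPn/negP => /incr [x [y [_ h]]].
have := cyc_le (tperm x y * u); rewrite h hu; lia.
Qed.

Lemma cyc_step x y (u : {perm T}) : cyc u <= (cyc (tperm x y * u)).+1.
Proof.
case: (eqVneq x y) => [->|xy]; first by rewrite tperm1 mul1g leqnSn.
have := porbits_mul_tperm u x y; rewrite /cyc xy.
by case: (_ \notin _) => /=; lia.
Qed.

Lemma cyc_fix x m (u : {perm T}) : u m = m -> x != m -> (cyc (tperm x m * u)).+1 = cyc u.
Proof.
move=> um xm; have := porbits_mul_tperm u x m.
rewrite porbit_fix // inE xm /cyc /=; lia.
Qed.

Lemma t0conj x y : t0 * tperm x y = tperm (t0 x) (t0 y) * t0.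
Proof. by rewrite -(tpermJ x y t0) /conjg tpermV -!mulgA tperm2 mulg1. Qed.

Definition kk (u : {perm T}) := maxn (cyc u) (cyc (t0 * u)).

Lemma kk_le u : kk u <= #|T|.
Proof. by rewrite geq_max !cyc_le. Qed.

Lemma kkt0 u : kk (t0 * u) = kk u.
Proof. by rewrite /kk mulgA tperm2 mul1g maxnC. Qed.

Lemma kk_step x y u : kk u <= (kk (tperm x y * u)).+1.
Proof.
rewrite /kk geq_max; apply/andP; split.
  apply: leq_trans (cyc_step x y u) _; rewrite ltnS; exact: leq_maxl.
rewrite mulgA t0conj -mulgA.
apply: leq_trans (cyc_step (t0 x) (t0 y) (t0 * u)) _; rewrite ltnS; exact: leq_maxr.
Qed.

Lemma kk_incr u : kk u < #|T| -> exists x y, x != y /\ kk (tperm x y * u) = (kk u).+1.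
Proof.
move=> hk.
suff [x [y [xy h]]] : exists x y, x != y /\ (kk u).+1 <= kk (tperm x y * u).
  exists x, y; split => //; apply/eqP; rewrite eqn_leq h andbT.
  by have := kk_step x y (tperm x y * u); rewrite tpermKg.
rewrite /kk; case: (leqP (cyc (t0 * u)) (cyc u)) => hc.
- have := hk; rewrite /kk (maxn_idPl hc) => hk'.
  have u1 : u != 1%g by apply: contraTneq hk' => ->; rewrite cyc1 ltnn.
  case: (incr u1) => x [y [xy h]]; exists x, y; split => //.
  by rewrite h leq_maxl.
- have hk' : cyc (t0 * u) < #|T| by apply: leq_ltn_trans hk; rewrite /kk leq_maxr.
  have u1 : t0 * u != 1%g by apply: contraTneq hk' => ->; rewrite cyc1 ltnn.
  case: (incr u1) => x [y [xy h]]; exists (t0 x), (t0 y); split.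
    by apply: contra xy => /eqP /perm_inj ->.
  rewrite -/(kk (tperm (t0 x) (t0 y) * u)) -kkt0 mulgA t0conj.
  by rewrite !tpermK -mulgA /kk h leq_maxl.
Qed.

Lemma kk_prod (w : seq {perm T}) :
  (forall t, t \in w -> exists i j, t = t0 * tperm i j) ->
  (#|T| <= kk (\prod_(t <- w) t) + size w)%N.
Proof.
elim: w => [_|t w IH hw]; first by rewrite big_nil addn0 /kk leq_max cyc1 leqnn.
rewrite big_cons /=.
have := IH (fun t' ht' => hw t' ltac:(by rewrite inE ht' orbT)).
have [i [j ->]] := hw t (mem_head _ _).
have := kk_step i j (\prod_(t <- w) t).
rewrite -mulgA kkt0; move=> h1 h2; apply: (leq_trans h2); by rewrite addnS -addSn leq_add2r.
Qed.

End Gen.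

Section In.
Variable n : nat.
Hypothesis hn : (1 < n)%N.
Let o0 : 'I_n := Ordinal (ltnW hn).
Let o1 : 'I_n := Ordinal hn.
Lemma o01 : o0 != o1. Proof. by []. Qed.
Local Notation t0 := (tperm o0 o1).
Local Notation k := (kk o0 o1).
Definition gg (u : {perm 'I_n}) := (n - k u)%N.

Lemma TA_form t : t \in TA n -> exists i j, t = (t0 * tperm i j)%g.
Proof.
rewrite inE => /existsP[a' /existsP[b' /existsP[i /existsP[j /and4P[ha hb _ /eqP ->]]]]].
have -> : a' = o0 by apply: val_inj; exact/eqP.
have -> : b' = o1 by apply: val_inj; exact/eqP.
by exists i, j.
Qed.

Lemma lower r v : is_prod_of r v -> (n <= k v + r)%N.
Proof.
case/existsP => w /andP[hall /eqP <-].
have := @kk_prod _ o0 o1 o01 w (fun t ht => TA_form (allP hall t ht)).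
by rewrite size_tuple card_ord.
Qed.

Lemma upper r v : ~~ odd_perm v -> (n - k v)%N = r -> is_prod_of r v.
Proof.
elim: r v => [|r IH] v ev hr.
  have kv : k v = n by have := kk_le o0 o1 v; rewrite card_ord; lia.
  have : (n <= cyc v)%N || (n <= cyc (t0 * v))%N by rewrite -leq_max -/(kk o0 o1 v) kv.
  case/orP => h.
    have : v = 1%g by apply: (cyc_eq1 o01); move: h; have := cyc_le v; rewrite card_ord; lia.
    move=> ->; apply/existsP; exists [tuple]; by rewrite /= big_nil.
  have : (t0 * v = 1)%g by apply: (cyc_eq1 o01); move: h; have := cyc_le (t0 * v)%g; rewrite card_ord; lia.
  move/(congr1 (mulg t0)); rewrite mulgA tperm2 mul1g mulg1 => ev'.
  by move: ev; rewrite ev' odd_tperm o01.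
have hk : (k v < #|'I_n|)%N by rewrite card_ord; lia.
case: (kk_incr o01 hk) => x [y [xy hxy]].
have [i [j [ij e]]] : exists i j : 'I_n, (i < j)%N /\ tperm i j = tperm (t0 x) (t0 y).
  case: (ltngtP (t0 x) (t0 y)) => h.
  - by exists (t0 x), (t0 y).
  - by exists (t0 y), (t0 x); split => //; rewrite tpermC.
  - by move: xy; rewrite -(inj_eq (@perm_inj _ t0)) -(inj_eq val_inj) /= h eqxx.
set v' := (tperm i j * t0 * v)%g.
have ev' : ~~ odd_perm v'.
  by rewrite /v' !odd_permM !odd_tperm o01 (_ : (i == j) = false) ?(negbTE ev) //; apply/negbTE; rewrite -(inj_eq val_inj) /= neq_ltn ij .
have kv' : k v' = (k v).+1.
  by rewrite /v' e -t0conj -mulgA kkt0 ?tpermK.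
have [w /andP[hall /eqP hw]] := existsP (IH v' ev' ltac:(rewrite kv'; lia)).
apply/existsP; exists [tuple of (t0 * tperm i j)%g :: w]; apply/andP; split.
  rewrite /= hall andbT inE; apply/existsP; exists o0; apply/existsP; exists o1.
  apply/existsP; exists i; apply/existsP; exists j; by rewrite ij !eqxx.
rewrite big_cons hw /v' !mulgA -(mulgA t0) tperm2 mulg1 tperm2 mul1g //.
Qed.

Lemma ellT_eq v : v \in Alt 'I_n -> ellT v = gg v.
Proof.
rewrite Alt_even => ev; rewrite /ellT.
case: excluded_middle_informative => [h|h]; last first.
  by exfalso; apply: h; exists (gg v); exact: upper.
case: ex_minnP => m Pm minm.
apply/anti_leq/andP; split; first by apply: minm; exact: upper.
have := lower Pm; rewrite /gg; lia.
Qed.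

Definition P m : {set {perm 'I_n}} := [set s | perm_on [set x : 'I_n | (x < m)%N] s].

Lemma helper m (hm : (m < n)%N) (j : 'I_n) (hj : (j < m.+1)%N) (s : {perm 'I_n}) :
  ((tperm j (Ordinal hm) * s)%g \in P m.+1) && ((tperm j (Ordinal hm) * s)^-1%g (Ordinal hm) == j)
  = (s \in P m).
Proof.
set mo := Ordinal hm.
have -> : ((tperm j mo * s)^-1%g mo == j) = (s mo == mo).
  rewrite invMg tpermV permM -[in X in _ == X](tpermR j mo) (inj_eq perm_inj).
  by apply/eqP/eqP => h; [rewrite -{1}h permKV | rewrite -{1}h permK].
have tj : perm_on [set x : 'I_n | (x < m.+1)%N] (tperm j mo).
  apply: subset_trans (tperm_on j mo) _; apply/subsetP => z.
  by rewrite !inE => /orP[]/eqP->.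
apply/idP/idP.
- case/andP => h1 /eqP h2; rewrite !inE in h1 *.
  have hs : perm_on [set x : 'I_n | (x < m.+1)%N] s.
    by rewrite -(tpermKg j mo s); apply: perm_onM.
  apply/subsetP => z hz; move/subsetP: hs => /(_ z hz); rewrite !inE ltnS leq_eqVlt.
  case/orP => [/eqP e|//]; exfalso.
  have ez : z = mo by apply: val_inj.
  by move: hz; rewrite inE ez h2 eqxx.
- move=> hs; rewrite inE in hs; apply/andP; split.
    rewrite inE; apply: perm_onM => //; apply: subset_trans hs _.
    by apply/subsetP => z; rewrite !inE => /ltnW.
  by rewrite (out_perm hs) // inE ltnn.
Qed.

Lemma step_sum m (hm : (m < n)%N) (F : {perm 'I_n} -> rat) :
  (\sum_(s in P m.+1) F s =
  \sum_(s in P m) \sum_(j < m.+1) F (tperm (widen_ord hm j) (Ordinal hm) * s)%g)%R.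
Proof.
set mo := Ordinal hm.
rewrite (partition_big (fun u : {perm 'I_n} => (u^-1)%g mo) (fun j : 'I_n => (j < m.+1)%N)) /=; last first.
  move=> u; rewrite inE => hu.
  have := @perm_closed _ _ _ mo (perm_onV hu); rewrite !inE /= ltnSn => ->.
  done.
rewrite (big_ord_narrow (F := fun j => (\sum_(i in P m.+1 | (i^-1)%g mo == j) F i)%R) hm).
rewrite [RHS]exchange_big /=; apply: eq_bigr => j _.
rewrite (reindex_inj (mulgI (tperm (widen_ord hm j) mo))) /=.
apply: eq_bigl => s; apply: helper => /=; exact: ltn_ord.
Qed.

Lemma gg1 : gg 1 = 0%N.
Proof.
rewrite /gg; have := kk_le o0 o1 1; have : (cyc (1 : {perm 'I_n}) <= kk o0 o1 1)%N := leq_maxl _ _.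
rewrite cyc1 card_ord => h _; apply/eqP; rewrite subn_eq0. exact h.
Qed.

Lemma ggt0 u : gg (t0 * u)%g = gg u.
Proof. by rewrite /gg kkt0. Qed.

Lemma gg_step m (hm : (m < n)%N) (h2 : (2 <= m)%N) s (hs : s \in P m) (j : 'I_n) :
  gg (tperm j (Ordinal hm) * s)%g = (gg s + (j != Ordinal hm))%N.
Proof.
set mo := Ordinal hm.
case: (eqVneq j mo) => [->|jm]; first by rewrite tperm1 mul1g addn0.
have smo : s mo = mo by rewrite inE in hs; rewrite (out_perm hs) // inE ltnn.
have t0mo : t0 mo = mo.
  by rewrite tpermD //; apply/eqP => /(congr1 val) /=; lia.
have h1 : (cyc (tperm j mo * s)%g).+1 = cyc s := cyc_fix o01 smo jm.
have h2' : (cyc (t0 * (tperm j mo * s))%g).+1 = cyc (t0 * s)%g.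
  rewrite mulgA t0conj -mulgA t0mo; apply: (cyc_fix o01); first by rewrite permM t0mo smo.
  apply: contra jm => /eqP h; apply/eqP; apply: (@perm_inj _ t0); by rewrite h t0mo.
rewrite /gg; have := kk_le o0 o1 s; rewrite /kk -h1 -h2' maxnSS card_ord; lia.
Qed.

Lemma sum_step m (hm : (m < n)%N) (h2 : (2 <= m)%N) (f : nat -> rat) :
  (\sum_(s in P m.+1) f (gg s) = \sum_(s in P m) (f (gg s) + m%:R * f (gg s).+1))%R.
Proof.
rewrite step_sum; apply: eq_bigr => s hs.
rewrite big_ord_recr /=.
have -> : widen_ord hm ord_max = Ordinal hm by apply: val_inj.
rewrite gg_step // eqxx addn0.
rewrite (eq_bigr (fun _ => f (gg s).+1)) => [|j _]; last first.
  by rewrite gg_step // -(inj_eq val_inj) /= neq_ltn ltn_ord addn1.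
by rewrite sumr_const card_ord addrC mulr_natl.
Qed.

Lemma P1 : P 1 = [set 1%g].
Proof.
apply/setP => s; rewrite !inE; apply/idP/eqP => [h|->]; last exact: perm_on1.
apply: perm_on_id h _.
apply: leq_trans (subset_leq_card (_ : _ \subset [set o0])) _; last by rewrite cards1.
by apply/subsetP => x; rewrite !inE => h; apply/eqP/val_inj => /=; lia.
Qed.

Lemma sum_base (f : nat -> rat) : (\sum_(s in P 2) f (gg s) = 2%:R * f 0%N)%R.
Proof.
rewrite (step_sum hn) P1 big_set1 big_ord_recr big_ord1 /=.
have -> : tperm (widen_ord hn ord_max) (Ordinal hn) = 1%g.
  by rewrite (_ : widen_ord hn ord_max = Ordinal hn) ?tperm1 //; apply: val_inj.
have -> : tperm (widen_ord hn (widen_ord (leqnSn 1) ord0)) (Ordinal hn) = t0.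
  by congr (tperm _ _); apply: val_inj.
rewrite mulg1 -[t0]mulg1 ggt0 mul1g gg1; ring.
Qed.

Local Open Scope ring_scope.
Lemma lin (A : {set {perm 'I_n}}) (c2 c1 c0 : rat) (G : {perm 'I_n} -> rat) :
  (\sum_(s in A) (c2 * G s ^+ 2 + c1 * G s + c0) =
   c2 * \sum_(s in A) G s ^+ 2 + c1 * \sum_(s in A) G s + c0 * \sum_(s in A) 1)%R.
Proof.
by rewrite !mulr_sumr -!big_split /=; apply: eq_bigr => *; rewrite mulr1.
Qed.

Lemma harmS m : harm m.+1 = (harm m + (m.+1%:R)^-1)%R.
Proof. by rewrite /harm big_nat_recr. Qed.
Lemma harm2S m : harm2 m.+1 = (harm2 m + ((m.+1%:R)^+2)^-1)%R.
Proof. by rewrite /harm2 big_nat_recr. Qed.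

Lemma moments d : (d.+2 <= n)%N ->
  [/\ (\sum_(s in P d.+2) (1:rat) = (d.+2)`!%:R)%R,
      (\sum_(s in P d.+2) ((gg s)%:R : rat) =
         (d.+2)`!%:R * ((d.+2)%:R - harm d.+2 - 1/2))%R &
      (\sum_(s in P d.+2) ((gg s)%:R ^+ 2 : rat) =
         (d.+2)`!%:R * (((d.+2)%:R - harm d.+2 - 1/2)^+2 + harm d.+2 - harm2 d.+2 - 1/4))%R].
Proof.
elim: d => [|d IH] hd.
  rewrite (sum_base (fun _ => 1%R)) (sum_base (fun k => (k%:R : rat))).
  rewrite (sum_base (fun k => (k%:R : rat)^+2)).
  rewrite (harmS 1) (harmS 0) (harm2S 1) (harm2S 0) /harm /harm2 !big_geq // /=.
have [I0 I1 I2] := IH (ltnW hd).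
have h2 : (2 <= d.+2)%N by [].
have e : ((d.+3)%:R = (d.+2)%:R + 1 :> rat)%R by rewrite natr1.
have nz : ((d.+2)%:R + 1 != 0 :> rat)%R by rewrite -e pnatr_eq0.
split.
- rewrite (sum_step hd h2 (fun _ => 1%R)).
  rewrite (eq_bigr (fun s => 0 * ((gg s)%:R)^+2 + 0 * (gg s)%:R + (1 + (d.+2)%:R))); last by move=> *; ring.
  rewrite lin (factS d.+2) natrM e I0 I1 I2; field => //; have := ler0n rat d; apply: contraTneq => h; lra.
- apply: eq_trans (sum_step hd h2 (fun k => (k%:R : rat))) _.
  rewrite (eq_bigr (fun s => 0 * ((gg s)%:R)^+2 + (1 + (d.+2)%:R) * (gg s)%:R + (d.+2)%:R)); last by move=> *; rewrite -natr1; ring.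
  rewrite lin (factS d.+2) natrM (harmS d.+2) e I0 I1 I2; field => //; have := ler0n rat d; apply: contraTneq => h; lra.
- apply: eq_trans (sum_step hd h2 (fun k => (k%:R : rat)^+2)) _.
  rewrite (eq_bigr (fun s => (1 + (d.+2)%:R) * ((gg s)%:R)^+2 + (2 * (d.+2)%:R) * (gg s)%:R + (d.+2)%:R)); last by move=> *; rewrite -natr1; ring.
  rewrite lin (factS d.+2) natrM (harmS d.+2) (harm2S d.+2) e I0 I1 I2; field => //; have := ler0n rat d; apply: contraTneq => h; lra.
Qed.

Lemma half (f : nat -> rat) :
  2%:R * \sum_(v in Alt 'I_n) f (gg v) = \sum_v f (gg v).
Proof.
rewrite [RHS](bigID (fun v => v \in Alt 'I_n)) /= mulr_natl mulr2n; congr (_ + _).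
rewrite [RHS](reindex_inj (mulgI t0)) /=; apply: eq_big => v.
  by rewrite !Alt_even odd_mul_tperm o01 /= negbK.
by rewrite ggt0.
Qed.

Lemma sumPn (f : {perm 'I_n} -> rat) : \sum_(v in P n) f v = \sum_v f v.
Proof. apply: eq_bigl => v; rewrite !inE; apply/subsetP => x _; by rewrite inE ltn_ord. Qed.

Lemma main_in :
  EAlt (fun v : {perm 'I_n} => (ellT v)%:R) = n%:R - harm n - 1 / 2 /\
  VarAlt (fun v : {perm 'I_n} => (ellT v)%:R) = harm n - harm2 n - 1 / 4.
Proof.
have e2 : n.-2.+2 = n by lia.
have [I0 I1 I2] := @moments n.-2 ltac:(by rewrite e2).
rewrite e2 !sumPn in I0 I1 I2.
have hA1 := half (fun k => k%:R); have hA2 := half (fun k => k%:R ^+ 2).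
rewrite /= I1 in hA1; rewrite /= I2 in hA2.
have cA : (#|Alt 'I_n|%:R : rat) * 2%:R = n`!%:R.
  by rewrite -natrM mulnC card_Alt card_ord.
have nz : (n`!%:R : rat) != 0 by rewrite pnatr_eq0 -lt0n fact_gt0.
rewrite /VarAlt /EAlt.
have -> : \sum_(v in Alt 'I_n) ((ellT v)%:R : rat) = \sum_(v in Alt 'I_n) (gg v)%:R.
  by apply: eq_bigr => v hv; rewrite ellT_eq.
have -> : \sum_(v in Alt 'I_n) ((ellT v)%:R ^+ 2 : rat) = \sum_(v in Alt 'I_n) (gg v)%:R ^+ 2.
  by apply: eq_bigr => v hv; rewrite ellT_eq.
move: hA1 hA2 cA nz.
move: (\sum_(v in Alt 'I_n) ((gg v)%:R : rat)) (\sum_(v in Alt 'I_n) ((gg v)%:R ^+ 2 : rat)).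
move: (#|Alt 'I_n|%:R : rat) (n`!%:R : rat) => C F A B hA hB hC hF.
have hC' : C = F / 2 by rewrite -hC; field.
have hA' : A = F * (n%:R - harm n - 1 / 2) / 2 by rewrite -hA; field.
have hB' : B = F * ((n%:R - harm n - 1 / 2) ^+ 2 + harm n - harm2 n - 1 / 4) / 2 by rewrite -hB; field.
rewrite hC' hA' hB'; split; field => //.
Qed.

End In.

Local Open Scope ring_scope.

Theorem theorem8p4 (n : nat) (hn : (2 <= n)%N) :
  EAlt (fun v : {perm 'I_n} => (ellT v)%:R) = n%:R - harm n - 1 / 2 /\
  VarAlt (fun v : {perm 'I_n} => (ellT v)%:R) = harm n - harm2 n - 1 / 4.
Proof. exact: main_in. Qed.
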